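(* Let $R$ be a ring and let $a\in R$ be regular. If (1) the right $R$-module $aR/ar(a^2)$ is projective and (2) $ar(a^2)\cong R/\big(r(a)+aR\big)$ as right $R$-modules, then $a$ is special clean, i.e., there exists an idempotent $e\in R$ such that $a-e$ is a unit of $R$ and $aR\cap eR=0$.
   Context: All rings are associative with identity; modules are right modules. An element $x\in R$ is regular if $x=xyx$ for some $y\in R$. For $x\in R$, $r(x)=\{y\in R: xy=0\}$, and $ar(a^2)=\{ay: y\in r(a^2)\}$. *)

(* Defs.v *)
From HB Require Import structures.
From mathcomp Require Import all_boot all_algebra.
Set Implicit Arguments. Unset Strict Implicit. Unset Printing Implicit Defensive.
Import GRing.Theory.
Local Open Scope ring_scope.

(* Rings: associative with identity (pzRingType allows also the zero ring).
   Subsets of R are Prop-valued predicates R -> Prop. *)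

Section RingDefs.
Variable R : pzRingType.

Definition regular (x : R) : Prop := exists y, x = x * y * x.

Definition is_unit (u : R) : Prop := exists v, u * v = 1 /\ v * u = 1.

Definition rann (x : R) : R -> Prop := fun y => x * y = 0.
Definition princ (x : R) : R -> Prop := fun z => exists y, z = x * y.
Definition a_ra2 (a : R) : R -> Prop := fun z => exists y, rann (a ^+ 2) y /\ z = a * y.
Definition isum (I J : R -> Prop) : R -> Prop :=
  fun z => exists i j, I i /\ J j /\ z = i + j.
Definition zero_set : R -> Prop := fun z => z = 0.
Definition full_set : R -> Prop := fun _ => True.

End RingDefs.

Record rmodule (R : pzRingType) := RModule {
  rm_car :> zmodType;
  rm_act : rm_car -> R -> rm_car;
  rm_actDl : forall (x y : rm_car) r, rm_act (x + y) r = rm_act x r + rm_act y r;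
  rm_actDr : forall (x : rm_car) r s, rm_act x (r + s) = rm_act x r + rm_act x s;
  rm_actA : forall (x : rm_car) r s, rm_act x (r * s) = rm_act (rm_act x r) s;
  rm_act1 : forall x : rm_car, rm_act x 1 = x
}.

Section ModDefs.
Variable R : pzRingType.

Definition is_rhom (M N : rmodule R) (f : M -> N) : Prop :=
  (forall x y, f (x + y) = f x + f y) /\
  (forall x r, f (rm_act x r) = rm_act (f x) r).

(* A subquotient A/B of R_R, with B <= A right ideals, is represented by the
   pair (A, B).  A homomorphism A/B -> M is represented by a map f : R -> M
   which is additive and R-linear on A and vanishes on B (i.e. a homomorphism
   A -> M whose kernel contains B); two such maps represent the same
   homomorphism iff they agree on A. *)
Definition is_sq_hom (A B : R -> Prop) (M : rmodule R) (f : R -> M) : Prop :=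
  (forall x y, A x -> A y -> f (x + y) = f x + f y) /\
  (forall x r, A x -> f (x * r) = rm_act (f x) r) /\
  (forall x, B x -> f x = 0).

Definition sq_projective (A B : R -> Prop) : Prop :=
  forall (N P : rmodule R) (g : N -> P), is_rhom g ->
    (forall p : P, exists n : N, g n = p) ->
  forall h : R -> P, is_sq_hom A B h ->
    exists k : R -> N, is_sq_hom A B k /\ (forall x, A x -> g (k x) = h x).

(* A1/B1 ~= A2/B2 as right R-modules: a map f : R -> R sending A1 into A2
   which induces an isomorphism A1/B1 -> A2/B2 (well defined, additive,
   R-linear, injective and surjective modulo B2). *)
Definition sq_iso (A1 B1 A2 B2 : R -> Prop) : Prop :=
  exists f : R -> R,
    (forall x, A1 x -> A2 (f x)) /\
    (forall x y, A1 x -> A1 y -> B2 (f (x + y) - (f x + f y))) /\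
    (forall x r, A1 x -> B2 (f (x * r) - f x * r)) /\
    (forall x, B1 x -> B2 (f x)) /\
    (forall x, A1 x -> B2 (f x) -> B1 x) /\
    (forall y, A2 y -> exists x, A1 x /\ B2 (f x - y)).

Definition special_clean (a : R) : Prop :=
  exists e : R, e * e = e /\ is_unit (a - e) /\
    (forall x, princ a x -> princ e x -> x = 0).

End ModDefs.

(* Main.v *)
From HB Require Import structures.
Require Import Defs.
From mathcomp Require Import all_boot all_algebra.
From mathcomp Require Import boolp.
Set Implicit Arguments. Unset Strict Implicit. Unset Printing Implicit Defensive.
Import GRing.Theory.
Local Open Scope ring_scope.

Section SubMod.
Variables (R : pzRingType) (c : R).
Definition cpred : pred R := fun x => `[< exists y, x = c * y >].
Definition cT := {x : R | cpred x}.
HB.instance Definition _ := Choice.on cT.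
Lemma cpredP x : reflect (exists y, x = c * y) (cpred x).
Proof. exact: asboolP. Qed.
Lemma cpred0 : cpred 0.
Proof. by apply/cpredP; exists 0; rewrite mulr0. Qed.
Lemma cpredD x y : cpred x -> cpred y -> cpred (x + y).
Proof. by move=> /cpredP[u ->] /cpredP[v ->]; apply/cpredP; exists (u + v); rewrite mulrDr. Qed.
Lemma cpredN x : cpred x -> cpred (- x).
Proof. by move=> /cpredP[u ->]; apply/cpredP; exists (- u); rewrite mulrN. Qed.
Lemma cpredM x r : cpred x -> cpred (x * r).
Proof. by move=> /cpredP[u ->]; apply/cpredP; exists (u * r); rewrite mulrA. Qed.
Definition c0 : cT := Sub 0 cpred0.
Definition cadd (x y : cT) : cT := Sub (val x + val y) (cpredD (valP x) (valP y)).
Definition copp (x : cT) : cT := Sub (- val x) (cpredN (valP x)).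
Definition cact (x : cT) (r : R) : cT := Sub (val x * r) (cpredM r (valP x)).
Lemma caddA : associative cadd.
Proof. by move=> x y z; apply: val_inj; rewrite /= addrA. Qed.
Lemma caddC : commutative cadd.
Proof. by move=> x y; apply: val_inj; rewrite /= addrC. Qed.
Lemma cadd0 : left_id c0 cadd.
Proof. by move=> x; apply: val_inj; rewrite /= add0r. Qed.
Lemma caddN : left_inverse c0 copp cadd.
Proof. by move=> x; apply: val_inj; rewrite /= addNr. Qed.
HB.instance Definition _ := GRing.isZmodule.Build cT caddA caddC cadd0 caddN.
Lemma cactDl (x y : cT) r : cact (x + y) r = cact x r + cact y r.
Proof. by apply: val_inj; rewrite /= mulrDl. Qed.
Lemma cactDr (x : cT) r s : cact x (r + s) = cact x r + cact x s.
Proof. by apply: val_inj; rewrite /= mulrDr. Qed.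
Lemma cactA (x : cT) r s : cact x (r * s) = cact (cact x r) s.
Proof. by apply: val_inj; rewrite /= mulrA. Qed.
Lemma cact1 (x : cT) : cact x 1 = x.
Proof. by apply: val_inj; rewrite /= mulr1. Qed.
Definition CM : rmodule R := @RModule R cT cact cactDl cactDr cactA cact1.
Lemma RactDl (x y : R) r : (x + y) * r = x * r + y * r. Proof. exact: mulrDl. Qed.
Lemma RactDr (x : R) r s : x * (r + s) = x * r + x * s. Proof. exact: mulrDr. Qed.
Lemma RactA (x : R) r s : x * (r * s) = x * r * s. Proof. exact: mulrA. Qed.
Lemma Ract1 (x : R) : x * 1 = x. Proof. exact: mulr1. Qed.
Definition RM : rmodule R := @RModule R R (fun x r => x * r) RactDl RactDr RactA Ract1.
End SubMod.

Lemma unit_of_bij (R : pzRingType) (w : R) :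
  (forall x, w * x = 0 -> x = 0) -> (exists s, w * s = 1) -> is_unit w.
Proof.
move=> inj [s ws]; exists s; split=> //.
apply/eqP; rewrite -subr_eq0; apply/eqP; apply: inj.
by rewrite mulrBr mulrA ws mul1r mulr1 subrr.
Qed.

Section J.
Variables (R : pzRingType) (a : R).
Definition J := isum (rann a) (princ a).
Lemma J_add x y : J x -> J y -> J (x + y).
Proof.
move=> [i [j [hi [[u ->] ->]]]] [i' [j' [hi' [[u' ->] ->]]]].
exists (i + i'), (a * (u + u')); split; last split.
- by rewrite /rann mulrDr hi hi' addr0.
- by exists (u + u').
- by rewrite mulrDr addrACA.
Qed.
Lemma J_opp x : J x -> J (- x).
Proof.
move=> [i [j [hi [[u ->] ->]]]].
exists (- i), (a * (- u)); split; last split.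
- by rewrite /rann mulrN hi oppr0.
- by exists (- u).
- by rewrite mulrN opprD.
Qed.
Lemma J_sub x y : J x -> J y -> J (x - y).
Proof. by move=> hx hy; apply: J_add => //; apply: J_opp. Qed.
Lemma J_r x : a * x = 0 -> J x.
Proof. by move=> hx; exists x, 0; split=> //; split; [exists 0; rewrite mulr0|rewrite addr0]. Qed.
Lemma J_a z : J (a * z).
Proof. by exists 0, (a * z); split; [rewrite /rann mulr0|split; [exists z|rewrite add0r]]. Qed.
End J.

Lemma proj_step (R : pzRingType) (a b : R) (hb : a = a * b * a) :
  sq_projective (princ a) (a_ra2 a) ->
  exists c, (a * b) * c = c /\ c * (a * b) = c /\ a * c = a * (a * b) /\
    (forall z, a * (a * z) = 0 -> c * (a * z) = 0).
Proof.
move=> proj.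
have cpf : forall n : R, cpred (a * a) (a * a * n).
  by move=> n; apply/cpredP; exists n.
pose g : RM R -> CM (a * a) := fun n => (Sub (a * a * n) (cpf n) : cT (a * a)).
pose h : R -> CM (a * a) := fun x => (Sub (a * a * (b * x)) (cpf (b * x)) : cT (a * a)).
have Hg : is_rhom g.
  split=> [x y|x r]; apply: val_inj; rewrite /= ?mulrDr ?mulrA //.
have Hs : forall p : CM (a * a), exists n : RM R, g n = p.
  move=> p; have /cpredP [n hn] := valP p; exists n; apply: val_inj.
  by rewrite /= hn.
have Hh : is_sq_hom (princ a) (a_ra2 a) h.
  split; last split.
  - by move=> x y _ _; apply: val_inj; rewrite /= !mulrDr.
  - by move=> x r _; apply: val_inj; rewrite /= !mulrA.
  - move=> x [y [hy ->]]; apply: val_inj => /=.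
    have -> : a * a * (b * (a * y)) = a * (a * y).
      by rewrite [b * (a * y)]mulrA -[a * a * _]mulrA [a * (b * a * y)]mulrA [a * (b * a)]mulrA -hb.
    by move: hy; rewrite /rann expr2 mulrA.
have [k [[kadd [klin k0]] kg]] := proj (RM R) (CM (a * a)) g Hg Hs h Hh.
have kgv : forall x, princ a x -> a * a * k x = a * a * (b * x).
  by move=> x hx; have := congr1 val (kg x hx).
have pa : a * b * a = a by rewrite -hb.
have pp : a * b * (a * b) = a * b by rewrite mulrA pa.
have hp : princ a (a * b) by exists b.
have kx : forall x, princ a x -> k x = k (a * b) * x.
  move=> x [y ->]; have e : a * y = a * b * (a * y) by rewrite mulrA pa.
  by rewrite {1}e (klin (a * b) (a * y) hp).
exists (a * k (a * b)); split; last split; last split.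
- by rewrite mulrA pa.
- by rewrite -mulrA -kx.
- by rewrite mulrA kgv // mulrA -[a * a * b]mulrA -mulrA pp.
- move=> z hz; rewrite -mulrA -kx; last by exists z.
  rewrite k0 ?mulr0 //; exists z; split=> //; by rewrite /rann expr2 -mulrA.
Qed.

Lemma m_step (R : pzRingType) (a b c : R) (hb : a = a * b * a)
  (pc : a * b * c = c) (cp : c * (a * b) = c) (ac : a * c = a * (a * b))
  (cz : forall z, a * (a * z) = 0 -> c * (a * z) = 0) :
  let m := a * b - c in
  m * m = m /\ a * b * m = m /\ m * (a * b) = m /\ a * m = 0 /\
  forall z, a * (a * z) = 0 -> m * (a * z) = a * z.
Proof.
move=> m.
have pa : a * b * a = a by rewrite -hb.
have pp : a * b * (a * b) = a * b by rewrite mulrA pa.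
have cc : c * c = c.
  have e : a * (b * c - b) = c - a * b by rewrite mulrBr !mulrA pc.
  have := cz (b * c - b); rewrite e mulrBr ac subrr mulrBr cp => /(_ erefl) /eqP.
  by rewrite subr_eq0 => /eqP.
rewrite /m; split; last split; last split; last split.
- by rewrite mulrBl !mulrBr pp pc cp cc subrr subr0.
- by rewrite mulrBr pp pc.
- by rewrite mulrBl pp cp.
- by rewrite mulrBr ac subrr.
- by move=> z hz; rewrite mulrBl cz // subr0 mulrA pa.
Qed.

Lemma zid1 (V : zmodType) (A X T : V) : A = (A - X) - (T - X) + T.
Proof. by rewrite opprB addrA subrK addrNK. Qed.
Lemma zid2 (V : zmodType) (Y F G T : V) : Y - T = - (F - Y) + (F - G) - (T - G).
Proof. by rewrite !opprB [_ + (F - G)]addrA subrK [_ + (G - T)]addrA subrK. Qed.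

Lemma ara2M (R : pzRingType) (a x r : R) : a_ra2 a x -> a_ra2 a (x * r).
Proof.
move=> [z [hz ->]]; exists (z * r); split; last by rewrite mulrA.
by rewrite /rann mulrA hz mul0r.
Qed.

Section Final.
Variables (R : pzRingType) (a b p m : R) (f : R -> R).
Hypothesis pa : p * a = a.
Hypothesis pp : p * p = p.
Hypothesis pab : forall x, p * x = a * (b * x).
Hypothesis mm : m * m = m.
Hypothesis pm : p * m = m.
Hypothesis mp : m * p = m.
Hypothesis am : a * m = 0.
Hypothesis mfix : forall z, a * (a * z) = 0 -> m * (a * z) = a * z.
Hypothesis fM : forall x r, a_ra2 a x -> J a (f (x * r) - f x * r).
Hypothesis finj : forall x, a_ra2 a x -> J a (f x) -> x = 0.
Hypothesis fsurj : forall y, exists x, a_ra2 a x /\ J a (f x - y).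

Lemma ma : a_ra2 a m.
Proof.
exists (b * m); split; last by rewrite -pab pm.
by rewrite /rann expr2 -mulrA -pab pm am.
Qed.

Lemma ar_fix x : a_ra2 a x -> m * x = x.
Proof. by move=> [z [hz ->]]; apply: mfix; move: hz; rewrite /rann expr2 mulrA. Qed.

Let t := (1 - p) * f m * m.
Lemma pt : p * t = 0.
Proof. by rewrite /t !mulrA mulrBr mulr1 pp subrr !mul0r. Qed.
Lemma tm : t * m = t.
Proof. by rewrite /t -mulrA mm. Qed.
Lemma mt : m * t = 0.
Proof. by rewrite /t !mulrA mulrBr mulr1 mp subrr !mul0r. Qed.
Lemma tp : t * p = t.
Proof. by rewrite /t -mulrA mp. Qed.
Lemma qt : (1 - p) * t = t.
Proof. by rewrite mulrBl mul1r pt subr0. Qed.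

Lemma Jt y : J a (t * y - f m * (m * y)).
Proof.
have -> : t * y - f m * (m * y) = a * (- (b * (f m * (m * y)))).
  rewrite mulrN -pab /t -!mulrA mulrBl mul1r.
  by rewrite addrAC subrr add0r.
exact: J_a.
Qed.

Lemma JB y : J a (t * y) -> m * y = 0.
Proof.
move=> hty.
have h1 := fM (m * y) ma; rewrite mulrA mm in h1.
apply: finj; first exact: ara2M ma.
rewrite (zid1 (f (m * y)) (f m * (m * y)) (t * y)).
by apply: J_add => //; apply: J_sub => //; exact: Jt.
Qed.

Lemma JC y : exists s, J a (y - t * s).
Proof.
have [x [hx hfx]] := fsurj y.
exists x.
have h1 := fM x ma; rewrite (ar_fix hx) in h1.
have h2 := Jt x; rewrite (ar_fix hx) in h2.
rewrite (zid2 y (f x) (f m * x) (t * x)).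
by apply: J_sub => //; apply: J_add => //; apply: J_opp.
Qed.

Let e := 1 - p - t.
Lemma pe : p * e = 0.
Proof. by rewrite /e !mulrBr mulr1 pp pt !subrr. Qed.
Lemma te : t * e = 0.
Proof.
have tt : t * t = 0 by rewrite -{1}tm -mulrA mt mulr0.
by rewrite /e !mulrBr mulr1 tp tt !subrr.
Qed.
Lemma ee : e * e = e.
Proof. by rewrite {1}/e !mulrBl mul1r pe te !subr0. Qed.
Lemma qe : (1 - p) * e = e.
Proof. by rewrite mulrBl mul1r pe subr0. Qed.

Lemma final : special_clean a.
Proof.
exists e; split; first exact: ee.
split; last first.
  move=> x [y ->] [z hz].
  have : p * (a * y) = a * y by rewrite mulrA pa.
  by rewrite {1}hz mulrA pe mul0r => <-.
apply: unit_of_bij.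
  move=> x hx.
  have ax : a * x = 0.
    have := congr1 (fun z => p * z) hx; rewrite /= mulrBl mulrBr !mulrA pa pe mul0r subr0 mulr0.
    done.
  have ex : e * x = 0 by move: hx; rewrite mulrBl ax sub0r => /eqP; rewrite oppr_eq0 => /eqP.
  have htx : t * x = x - p * x.
    by move: ex; rewrite /e !mulrBl mul1r => /eqP; rewrite subr_eq0 => /eqP <-.
  have mx : m * x = 0.
    apply: JB; rewrite htx; apply: J_sub; first exact: J_r.
    by rewrite pab; exact: J_a.
  have xp : x = p * x.
    apply/eqP; rewrite -subr_eq0 -htx -[t]tm -mulrA mx; apply/eqP; exact: mulr0.
  rewrite xp pab -(mfix (z := b * x)); last by rewrite -pab -xp ax.
  by rewrite -pab -xp mx.
pose y0 := - (1 - p) - e * (b * p).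
have [s [i [j [ri [[z ->] hy]]]]] := JC y0.
pose x1 := i - m * i - m * s.
have ex1 : e * x1 = y0.
  have hq : (1 - p) * y0 = y0.
    have qq : (1 - p) * (1 - p) = 1 - p by rewrite mulrBl mul1r mulrBr mulr1 pp subrr subr0.
    by rewrite /y0 mulrBr mulrN !mulrA qe qq.
  have e1 : (1 - p) * x1 = (1 - p) * i.
    have qm : (1 - p) * m = 0 by rewrite mulrBl mul1r pm subrr.
    by rewrite /x1 !mulrBr !mulrA qm !mul0r !subr0.
  have e2 : t * x1 = - (t * s).
    by rewrite /x1 !mulrBr !mulrA tm subrr sub0r.
  have e3 : y0 = t * s + (1 - p) * i.
    have : y0 = t * s + (i + a * z) by rewrite -hy addrC subrK.
    have qa : (1 - p) * a = 0 by rewrite mulrBl mul1r pa subrr.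
    move=> hy0; rewrite -[in LHS]hq hy0 !mulrDr mulrA qt [(1 - p) * (a * z)]mulrA qa mul0r addr0.
    done.
  by rewrite e3 /e -/(1 - p) mulrBl e1 e2 opprK addrC.
exists (b * p + x1).
have ax1 : a * x1 = 0 by rewrite /x1 !mulrBr ri !mulrA am !mul0r !subr0.
rewrite mulrBl (mulrDr a) (mulrDr e) ex1 ax1 addr0 -pab pp /y0.
by rewrite [e * (b * p) + _]addrC subrK opprK addrC subrK.
Qed.
End Final.

Theorem lemma3p2 (R : pzRingType) (a : R) :
  regular a ->
  sq_projective (princ a) (a_ra2 a) ->
  sq_iso (a_ra2 a) (@zero_set R) (@full_set R) (isum (rann a) (princ a)) ->
  special_clean a.
Proof.
move=> [b hb] proj [f [_ [_ [fM [_ [finj fsurj]]]]]].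
have [c [pc [cp [ac cz]]]] := proj_step hb proj.
have [mm [pm [mp [am mfix]]]] := m_step hb pc cp ac cz.
apply: (@final R a b (a * b) (a * b - c) f) => //.
- by rewrite mulrA -hb.
- by move=> x; rewrite mulrA.
- by move=> y; apply: fsurj.
Qed.
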